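(* Let $\tilde Q$ be the subgroup of $Q_C$ generated by the images of $A_1,\dots,A_m$. Then $\tilde Q$ is a malnormal subgroup of $Q_C$, i.e. for every $g\in Q_C\setminus\tilde Q$ one has $g^{-1}\tilde Qg\cap\tilde Q=\{1\}$.
   Context: Let $Q$ be a finitely generated recursively presented group with presentation $\langle Y\mid\mathcal{S}\rangle$, where $Y=\{y_1,\dots,y_m\}$ is finite, $\mathcal{S}$ is a recursive set of positive words over $Y$, and the empty word is not in $\mathcal{S}$. Let $C\ge1$ be an integer. For $i=1,\dots,m$ let $Y_{C,i}=\{a_{1,i},\dots,a_{C,i}\}$, $Y_C=\bigcup_iY_{C,i}$ (all letters distinct), $A_i=a_{1,i}\cdots a_{C,i}\in F(Y_C)$. For $r=r(y_1,\dots,y_m)\in\mathcal{S}$ let $r_C=r(A_1,\dots,A_m)$, $\mathcal{S}_C=\{r_C:r\in\mathcal{S}\}$, and $Q_C=\langle Y_C\mid\mathcal{S}_C\rangle$. *)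

(* Defs.v *)
From mathcomp Require Import all_boot.
Set Implicit Arguments. Unset Strict Implicit. Unset Printing Implicit Defensive.

(* Group presentations, modelled at the level of words.
   A word over an alphabet X is a sequence of signed letters (x, b),
   where b = false means x and b = true means x^-1. *)
Definition word (X : Type) := seq (X * bool).

Definition winv {X : Type} (w : word X) : word X :=
  rev [seq (p.1, ~~ p.2) | p <- w].

(* Its classes are exactly the
   elements of the presented group F(X)/<<R>>. *)
Inductive pres_eq {X : Type} (R : word X -> Prop) : word X -> word X -> Prop :=
| pe_refl w : pres_eq R w w
| pe_sym u v : pres_eq R u v -> pres_eq R v u
| pe_trans u v w : pres_eq R u v -> pres_eq R v w -> pres_eq R u w
| pe_free u v x b : pres_eq R (u ++ (x, b) :: (x, ~~ b) :: v) (u ++ v)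
| pe_rel u v r : R r -> pres_eq R (u ++ r ++ v) (u ++ v).

(* Q_C: letters a_{j,i} are pairs (j, i) : 'I_C * 'I_m. *)
Definition A_word (C m : nat) (i : 'I_m) : word ('I_C * 'I_m) :=
  [seq ((j, i), false) | j <- enum 'I_C].

Definition relC (C m : nat) (r : seq 'I_m) : word ('I_C * 'I_m) :=
  flatten [seq @A_word C m i | i <- r].

Definition S_C (C m : nat) (S : pred (seq 'I_m)) : word ('I_C * 'I_m) -> Prop :=
  fun w => exists2 r, S r & w = @relC C m r.

Definition QC_eq (C m : nat) (S : pred (seq 'I_m)) :=
  pres_eq (@S_C C m S).

Definition A_expand (C m : nat) (s : seq ('I_m * bool)) : word ('I_C * 'I_m) :=
  flatten [seq (if p.2 then winv (@A_word C m p.1) else @A_word C m p.1) | p <- s].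

Definition in_tildeQ (C m : nat) (S : pred (seq 'I_m)) (w : word ('I_C * 'I_m)) : Prop :=
  exists s : seq ('I_m * bool), @QC_eq C m S w (@A_expand C m s).

(* Main.v *)
Require Import Defs.
From mathcomp Require Import all_boot.
From Stdlib Require Import ClassicalEpsilon FunctionalExtensionality PropExtensionality.
Set Implicit Arguments. Unset Strict Implicit. Unset Printing Implicit Defensive.

Section Generic.
Variable X : Type.
Variable R : word X -> Prop.
Notation peq := (pres_eq R).

Lemma pe_catl a u v : peq u v -> peq (a ++ u) (a ++ v).
Proof.
elim=> {u v} [w|u v _ IH|u v w _ IH1 _ IH2|u v x b|u v r Hr].
- exact: pe_refl.
- exact: pe_sym.
- exact: pe_trans IH1 IH2.
- by rewrite !catA; apply: pe_free.
- by rewrite !catA -(catA _ r); apply: pe_rel.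
Qed.

Lemma pe_catr b u v : peq u v -> peq (u ++ b) (v ++ b).
Proof.
elim=> {u v} [w|u v _ IH|u v w _ IH1 _ IH2|u v x c|u v r Hr].
- exact: pe_refl.
- exact: pe_sym.
- exact: pe_trans IH1 IH2.
- by rewrite -!catA /=; apply: pe_free.
- by rewrite -!catA; apply: pe_rel.
Qed.

Lemma pe_cat u u' v v' : peq u u' -> peq v v' -> peq (u ++ v) (u' ++ v').
Proof.
move=> H1 H2; apply: pe_trans (pe_catr _ H1) _; exact: pe_catl.
Qed.

Lemma winv_cons (l : X * bool) w : winv (l :: w) = winv w ++ [:: (l.1, ~~ l.2)].
Proof. by rewrite /winv map_cons rev_cons cats1. Qed.

Lemma winv_cat (u v : word X) : winv (u ++ v) = winv v ++ winv u.
Proof. by rewrite /winv map_cat rev_cat. Qed.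

Lemma winvK (w : word X) : winv (winv w) = w.
Proof.
rewrite /winv map_rev revK -map_comp.
elim: w => [|[x b] w IH] //=; by rewrite negbK IH.
Qed.

Lemma pe_winvr (w : word X) : peq (w ++ winv w) [::].
Proof.
elim: w => [|l w IH]; first exact: pe_refl.
rewrite winv_cons /= catA.
apply: pe_trans (_ : peq (l :: [:: (l.1, ~~ l.2)]) [::]).
  exact: (pe_catl [:: l] (pe_catr [:: (l.1, ~~ l.2)] IH)).
case: l => x b /=. exact: (pe_free R [::] [::] x b).
Qed.

Lemma pe_winvl (w : word X) : peq (winv w ++ w) [::].
Proof. by have := pe_winvr (winv w); rewrite winvK. Qed.

Lemma pe_cancel t w : peq (t ++ w) w -> peq t [::].
Proof.
move=> H.
apply: pe_trans (_ : peq (t ++ (w ++ winv w)) _).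
  by apply: pe_sym; have := pe_catl t (pe_winvr w); rewrite cats0.
rewrite catA; apply: pe_trans (pe_winvr w); exact: pe_catr.
Qed.
End Generic.

Section Main.
Variables (m C' : nat) (S : pred (seq 'I_m)).
Notation C := C'.+1.
Notation L := ('I_C * 'I_m)%type.
Notation QC := (@QC_eq C m S).

Definition pos (r : seq 'I_m) : word 'I_m := [seq (i, false) | i <- r].
Definition RY : word 'I_m -> Prop := fun w => exists2 r, S r & w = pos r.
Notation QY := (pres_eq RY).

Definition rep (u : word 'I_m) : word 'I_m :=
  epsilon (inhabits u) (fun v => QY u v).

Lemma rep_spec u : QY u (rep u).
Proof. rewrite /rep; apply: epsilon_spec; exists u; exact: pe_refl. Qed.

Lemma rep_eq u v : QY u v -> rep u = rep v.
Proof.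
move=> H; rewrite /rep.
have -> : (fun w => QY u w) = (fun w => QY v w).
  apply: functional_extensionality => w; apply: propositional_extensionality.
  split=> H'; [apply: pe_trans (pe_sym H) H' | apply: pe_trans H H'].
by have -> : inhabits u = inhabits v by apply: proof_irrelevance.
Qed.

Lemma rep_idem u : rep (rep u) = rep u.
Proof. apply: rep_eq; apply: pe_sym; exact: rep_spec. Qed.

Lemma rep_catr u w : rep (u ++ rep w) = rep (u ++ w).
Proof. apply: rep_eq; apply: pe_catl; apply: pe_sym; exact: rep_spec. Qed.

Definition e := rep [::].

Lemma rep_e u : rep u = e -> QY u [::].
Proof.
move=> H; apply: pe_trans (rep_spec u) _; rewrite H; apply: pe_sym; exact: rep_spec.
Qed.

Lemma A_expand_cat (u v : word 'I_m) : A_expand C (u ++ v) = A_expand C u ++ A_expand C v.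
Proof. by rewrite /A_expand map_cat flatten_cat. Qed.

Lemma A_expand_pos r : A_expand C (pos r) = relC C r.
Proof. by rewrite /A_expand /relC /pos -map_comp. Qed.

Lemma lift_QY u v : QY u v -> QC (A_expand C u) (A_expand C v).
Proof.
elim=> {u v} [w|u v _ IH|u v w _ IH1 _ IH2|u v x b|u v r Hr].
- exact: pe_refl.
- exact: pe_sym.
- exact: pe_trans IH1 IH2.
- rewrite !A_expand_cat; apply: pe_catl. rewrite /A_expand /= catA.
  set V := flatten _; rewrite -{2}[V]cat0s; apply: pe_catr.
  case: b => /=; [exact: pe_winvl | exact: pe_winvr].
- case: Hr => r0 Sr0 ->; rewrite !A_expand_cat A_expand_pos.
  apply: pe_rel; by exists r0.
Qed.

Definition Syl := (word 'I_m + (L * bool))%type.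

Definition good (s : Syl) : bool :=
  match s with inl w => (rep w == w) && (w != e) | inr l => val l.1.1 != 0 end.
Definition adj (s1 s2 : Syl) : bool :=
  match s1, s2 with
  | inl _, inl _ => false
  | inr l, inr l' => ~~ ((l'.1 == l.1) && (l'.2 == ~~ l.2))
  | _, _ => true
  end.
Definition reduced (x : seq Syl) := all good x && sorted adj x.

Definition LQ (u : word 'I_m) (x : seq Syl) : seq Syl :=
  match x with
  | inl w :: rest => if rep (u ++ w) == e then rest else inl (rep (u ++ w)) :: rest
  | _ => if rep u == e then x else inl (rep u) :: x
  end.
Definition LF (l : L * bool) (x : seq Syl) : seq Syl :=
  match x with
  | inr l' :: rest => if (l'.1 == l.1) && (l'.2 == ~~ l.2) then rest else inr l :: x
  | _ => inr l :: x
  end.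

Lemma red_cons s x : reduced (s :: x) =
  [&& good s, (if x is s' :: _ then adj s s' else true) & reduced x].
Proof.
rewrite /reduced /=; case: x => [|s' x] /=; first by rewrite !andbT.
by case: (good s); case: (adj s s'); case: (good s'); case: (all good x).
Qed.

Lemma red_nil : reduced [::]. Proof. by []. Qed.

Lemma good_rep v : rep v != e -> good (inl (rep v)).
Proof. by move=> H; rewrite /= rep_idem eqxx H. Qed.

Lemma LQ_red u x : reduced x -> reduced (LQ u x).
Proof.
case: x => [|[w|l] x] /=.
- by case: eqP => // /eqP H; rewrite red_cons good_rep.
- rewrite red_cons => /and3P [_ Ha Hx].
  case: eqP => // /eqP H; rewrite red_cons good_rep //= Hx andbT.
  by case: x Ha {Hx} => [|[w'|l'] x].
- move=> Hx; case: eqP => // /eqP H; by rewrite red_cons good_rep //= Hx.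
Qed.

Lemma LF_red l x : good (inr l) -> reduced x -> reduced (LF l x).
Proof.
move=> Hl; case: x => [|[w|l'] x] /=.
- by rewrite red_cons Hl.
- by move=> Hx; rewrite red_cons Hl Hx.
- rewrite red_cons => /and3P [Hl' Ha Hx].
  case: ifP => [_|H]; first by [].
  by rewrite red_cons Hl /= H /= red_cons Hl' Ha Hx.
Qed.

Lemma LQ_0 x : reduced x -> LQ [::] x = x.
Proof.
case: x => [|[w|l] x] /=; rewrite /e ?eqxx //.
rewrite red_cons => /and3P [/andP [/eqP Hw Hne] _ _].
by rewrite Hw (negbTE Hne).
Qed.

Lemma LQ_eq u v x : QY u v -> LQ u x = LQ v x.
Proof.
move=> H; case: x => [|[w|l] x] /=.
- by rewrite (rep_eq H).
- by rewrite (rep_eq (pe_catr w H)).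
- by rewrite (rep_eq H).
Qed.

Lemma LQ_comp u v x : reduced x -> LQ u (LQ v x) = LQ (u ++ v) x.
Proof.
case: x => [|[w|l] x] /=.
- move=> _; case: eqP => [/rep_e H|_] /=.
    by rewrite (rep_eq (_ : QY (u ++ v) u)) // -{2}(cats0 u); apply: pe_catl.
  by rewrite rep_catr.
- rewrite red_cons => /and3P [_ Ha _].
  case: eqP => [/rep_e H|_] /=.
    rewrite -catA (rep_eq (_ : QY (u ++ v ++ w) u)); last first.
      by rewrite -{2}(cats0 u); apply: pe_catl.
    by case: x Ha => [|[w'|l'] x].
  by rewrite rep_catr catA.
- by move=> _; case: eqP => [/rep_e H|_] /=;
    [rewrite (rep_eq (_ : QY (u ++ v) u)) // -{2}(cats0 u); apply: pe_catl
    | rewrite rep_catr].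
Qed.

Lemma LF_inv f b x : reduced x -> LF (f, b) (LF (f, ~~ b) x) = x.
Proof.
case: x => [|[w|[f' b']] x] /=; rewrite ?eqxx ?negbK ?andbT //.
rewrite red_cons => /and3P [_ Ha _].
case: ifP => [/andP [/eqP E1 /eqP E2]|H] /=.
- subst; case: x Ha => [|[w|[f'' b'']] x] //= Ha.
  by rewrite (negbTE Ha).
- by rewrite !eqxx.
Qed.

Definition actF (w : word L) (x : seq Syl) := foldr LF x w.
Definition T (i : 'I_m) : word L := [seq ((lift ord0 j, i), false) | j <- enum 'I_C'].
Definition act1 (l : L * bool) (x : seq Syl) : seq Syl :=
  let: ((j, i), b) := l in
  if val j == 0 then
    (if b then actF (T i) (LQ [:: (i, true)] x) else LQ [:: (i, false)] (actF (winv (T i)) x))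
  else LF l x.
Definition act (w : word L) (x : seq Syl) := foldr act1 x w.
Definition sig (s : Syl) : word L := match s with inl w => A_expand C w | inr l => [:: l] end.
Definition nf (x : seq Syl) : word L := flatten (map sig x).

Definition gl (l : L * bool) := val l.1.1 != 0.

Lemma A_word_split i : A_word C i = ((ord0, i), false) :: T i.
Proof. by rewrite /A_word enum_ordSl /= -map_comp. Qed.

Lemma all_winv (w : word L) : all gl w -> all gl (winv w).
Proof. by rewrite /winv all_rev all_map; apply: sub_all => -[[j i] b]. Qed.

Lemma T_gl i : all gl (T i).
Proof. by rewrite /T all_map; apply/allP => j _. Qed.

Lemma actF_red w x : all gl w -> reduced x -> reduced (actF w x).
Proof.
elim: w => [|l w IH] //= /andP [Hl Hw] Hx; apply: LF_red => //; exact: IH.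
Qed.

Lemma actF_cat u v x : actF (u ++ v) x = actF u (actF v x).
Proof. by rewrite /actF foldr_cat. Qed.

Lemma actF_inv w x : all gl w -> reduced x -> actF (winv w) (actF w x) = x.
Proof.
elim: w x => [|l w IH] x //= /andP [Hl Hw] Hx.
rewrite winv_cons actF_cat /=; case: l Hl => f b Hl /=.
by have := LF_inv f (~~ b) (actF_red Hw Hx); rewrite negbK => ->; apply: IH.
Qed.

Lemma act1_red l x : reduced x -> reduced (act1 l x).
Proof.
case: l => [[j i] b] Hx /=; case: eqP => Hj.
- case: b.
  + by apply: actF_red; [exact: T_gl | exact: LQ_red].
  + by apply: LQ_red; apply: actF_red => //; apply: all_winv; exact: T_gl.
- by apply: LF_red => //=; apply/eqP.
Qed.

Lemma act_red w x : reduced x -> reduced (act w x).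
Proof. elim: w => [|l w IH] //= Hx; apply: act1_red; exact: IH. Qed.

Lemma act_cat u v x : act (u ++ v) x = act u (act v x).
Proof. by rewrite /act foldr_cat. Qed.

Lemma LQ_inv i b x : reduced x -> LQ [:: (i, b)] (LQ [:: (i, ~~ b)] x) = x.
Proof.
move=> Hx; rewrite LQ_comp // (LQ_eq _ (_ : QY _ [::])) ?LQ_0 //.
exact: (pe_free RY [::] [::] i b).
Qed.

Lemma act1_inv f b x : reduced x -> act1 (f, b) (act1 (f, ~~ b) x) = x.
Proof.
case: f => j i Hx /=; case: eqP => Hj.
- have HT := T_gl i; have HT' := all_winv HT.
  case: b => /=.
  + have := LQ_inv i true (actF_red HT' Hx); rewrite /= => ->.
    by rewrite -{1}(winvK (T i)) actF_inv.
  + by rewrite actF_inv ?LQ_red // (LQ_inv i false Hx).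
- by rewrite LF_inv.
Qed.

Lemma act_winv w x : reduced x -> act (winv w) (act w x) = x.
Proof.
elim: w x => [|[f b] w IH] x // Hx.
rewrite winv_cons act_cat.
change (act (winv w) (act1 (f, ~~ b) (act1 (f, b) (act w x))) = x).
have := act1_inv f (~~ b) (act_red w Hx); rewrite negbK => ->; exact: IH.
Qed.

Lemma act_winv' w x : reduced x -> act w (act (winv w) x) = x.
Proof. by move=> Hx; rewrite -{1}(winvK w) act_winv. Qed.

Lemma act_Aword i x : reduced x -> act (A_word C i) x = LQ [:: (i, false)] x.
Proof.
move=> Hx; rewrite A_word_split /=.
have -> : act (T i) x = actF (T i) x.
  elim: (T i) (T_gl i) => [|l w IH] //= /andP [Hl Hw].
  rewrite IH //; case: l Hl => [[j i'] b] /= Hl; by rewrite (negbTE Hl).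
by rewrite actF_inv // T_gl.
Qed.

Lemma act_Aword_inv i x : reduced x -> act (winv (A_word C i)) x = LQ [:: (i, true)] x.
Proof.
move=> Hx.
have H1 := LQ_red [:: (i, true)] Hx.
have := LQ_inv i false Hx; rewrite /= => E.
by rewrite -{1}E -act_Aword // act_winv.
Qed.

Lemma act_Aexpand s x : reduced x -> act (A_expand C s) x = LQ s x.
Proof.
elim: s x => [|[i b] s IH] x Hx /=; first by rewrite LQ_0.
rewrite act_cat -/(A_expand C s) IH //.
have -> : (i, b) :: s = [:: (i, b)] ++ s by [].
rewrite -LQ_comp //; case: b => /=.
- exact: act_Aword_inv (LQ_red _ Hx).
- exact: act_Aword (LQ_red _ Hx).
Qed.

Lemma act_sound u v x : QC u v -> reduced x -> act u x = act v x.
Proof.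
move=> H; elim: H x => {u v} [w|u v _ IH|u v w _ IH1 _ IH2|u v f b|u v r Hr] x Hx.
- by [].
- by rewrite IH.
- by rewrite IH1 ?IH2.
- rewrite !act_cat; change (act u (act1 (f, b) (act1 (f, ~~ b) (act v x))) = act u (act v x)).
  by rewrite act1_inv // act_red.
- case: Hr => r0 Sr0 ->; rewrite !act_cat -A_expand_pos act_Aexpand ?act_red //.
  rewrite (LQ_eq _ (_ : QY _ [::])) ?LQ_0 ?act_red //.
  by have := @pe_rel _ RY [::] [::] (pos r0); rewrite cats0; apply; exists r0.
Qed.

Lemma nf_cons s x : nf (s :: x) = sig s ++ nf x. Proof. by []. Qed.

Lemma QC_cancel a w b : QC (a ++ w ++ winv w ++ b) (a ++ b).
Proof.
apply: pe_catl; rewrite catA -{2}[b]cat0s; apply: pe_catr; exact: pe_winvr.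
Qed.


Lemma LF_nf l x : QC (l :: nf x) (nf (LF l x)).
Proof.
case: x => [|[w|l'] x]; try exact: pe_refl.
rewrite /LF; case: ifP => [/andP [/eqP E1 /eqP E2]|_]; last exact: pe_refl.
rewrite nf_cons /=; case: l E1 E2 => f b; case: l' => f' b' /= -> ->.
exact: (pe_free _ [::] (nf x) f b).
Qed.

Lemma LQ_nf u x : QC (A_expand C u ++ nf x) (nf (LQ u x)).
Proof.
case: x => [|[w|l] x]; rewrite /LQ.
- case: eqP => [/rep_e H|_].
    by have := lift_QY H; rewrite /= => H'; have := pe_catr [::] H'.
  by rewrite nf_cons; apply: pe_catr; apply: lift_QY; exact: rep_spec.
- case: eqP => [/rep_e H|_]; rewrite nf_cons catA.
    by have := pe_catr (nf x) (lift_QY H); rewrite A_expand_cat.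
  by apply: pe_catr; rewrite -A_expand_cat; apply: lift_QY; exact: rep_spec.
- case: eqP => [/rep_e H|_].
    by have := pe_catr (nf (inr l :: x)) (lift_QY H).
  by rewrite nf_cons; apply: pe_catr; apply: lift_QY; exact: rep_spec.
Qed.

Lemma actF_nf w x : QC (w ++ nf x) (nf (actF w x)).
Proof.
elim: w => [|l w IH]; first exact: pe_refl.
apply: pe_trans (LF_nf _ _); exact: (pe_catl [:: l] IH).
Qed.

Lemma act1_nf l x : reduced x -> QC (l :: nf x) (nf (act1 l x)).
Proof.
case: l => [[j i] b] Hx /=; case: eqP => Hj; last exact: LF_nf.
have -> : j = ord0 by apply: val_inj.
case: b.
- apply: pe_trans (actF_nf _ _); apply: pe_trans (pe_catl _ (LQ_nf _ _)).
  rewrite /A_expand /= A_word_split winv_cons cats0 -catA.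
  have := QC_cancel [::] (T i) ([:: (ord0, i, true)] ++ nf x); exact: pe_sym.
- apply: pe_trans (LQ_nf _ _).
  rewrite /A_expand /= A_word_split cats0 /=.
  apply: (pe_catl [:: _]); apply: pe_trans (pe_catl _ (actF_nf _ _)).
  have := QC_cancel [::] (T i) (nf x); exact: pe_sym.
Qed.

Lemma act_nf w x : reduced x -> QC (w ++ nf x) (nf (act w x)).
Proof.
move=> Hx; elim: w => [|l w IH]; first exact: pe_refl.
apply: pe_trans (act1_nf _ (act_red _ Hx)); exact: (pe_catl [:: l] IH).
Qed.

Definition isinr (s : Syl) := if s is inr _ then true else false.

Lemma act_nf_cat p y : reduced (p ++ y) -> act (nf p) y = p ++ y.
Proof.
elim: p => [|s p IH] //= Hr.
move: (Hr); rewrite red_cons => /and3P [Hs Ha Hpy].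
rewrite act_cat IH //.
case: s Hs Ha Hr => [w|l] Hs Ha Hr.
- rewrite act_Aexpand //; move: Hs => /andP [/eqP Hw Hne].
  rewrite /LQ; case: (p ++ y) Ha => [|[w'|l'] z] //= _; rewrite ?cats0 Hw (negbTE Hne) //.
- change (act1 l (p ++ y) = inr l :: p ++ y).
  case: l Hs Ha Hr => [[j i] b] Hs Ha Hr /=; rewrite (negbTE Hs).
  case: (p ++ y) Ha => [|[w'|l'] z] //= Ha.
  by rewrite (negbTE Ha).
Qed.

Lemma redR_sub a s : reduced (rcons a s) -> reduced a.
Proof.
elim: a => [|x a IH] //=; rewrite !red_cons => /and3P [Hx Ha Hr].
rewrite Hx IH // andbT; by case: a Ha {IH Hr}.
Qed.

Lemma redR_swap a w q : reduced (rcons a (inl w)) -> good (inl q) -> reduced (rcons a (inl q)).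
Proof.
elim: a => [|x a IH] /=; first by rewrite !red_cons /= => _ ->.
rewrite !red_cons => /and3P [Hx Ha Hr] Hq.
rewrite Hx IH // andbT; case: a Ha {IH Hr} => //=; by case: x Hx.
Qed.

Lemma redR_ext a s s' : reduced (rcons a s) -> good s' -> adj s s' ->
  reduced (rcons (rcons a s) s').
Proof.
elim: a => [|x a IH] /=.
  by rewrite !red_cons /= => /and3P [-> _ _] -> ->.
rewrite !red_cons => /and3P [Hx Ha Hr] Hs' Hss'.
rewrite Hx IH // andbT; by case: a Ha {IH Hr}.
Qed.

Lemma nf_rcons a s : nf (rcons a s) = nf a ++ sig s.
Proof. by rewrite /nf map_rcons -cats1 flatten_cat /= cats0. Qed.

Lemma LQ_nil_cases u : LQ u [::] = [::] \/ exists2 q, good (inl q) & LQ u [::] = [:: inl q].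
Proof.
rewrite /LQ; case: eqP => [_|/eqP H]; [by left | right].
by exists (rep u); [exact: good_rep|].
Qed.

Lemma act_nf_head s0 p1 t' : reduced (s0 :: p1) -> (p1 = [::] -> isinr s0) ->
  exists z, act (nf (s0 :: p1)) (LQ t' [::]) = s0 :: z.
Proof.
move=> Hr Hp1; case: (lastP p1) Hp1 Hr => [|p1' s] Hp1 Hr.
- case: s0 Hp1 Hr => [w|l] Hp1 Hr; first by have := Hp1 erefl.
  case: (LQ_nil_cases t') => [->|[q Hq ->]].
    by exists [::]; rewrite act_nf_cat ?cats0.
  exists [:: inl q]; rewrite act_nf_cat //.
  move: Hr Hq; rewrite /= !red_cons /= => /and3P [-> _ _] ->; by [].
- have E : s0 :: rcons p1' s = rcons (s0 :: p1') s by [].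
  rewrite E in Hr *.
  clear Hp1 E; case: s Hr => [w|l] Hr.
  + rewrite nf_rcons act_cat [sig _]/= act_Aexpand ?LQ_red // LQ_comp //.
    case: (LQ_nil_cases (w ++ t')) => [->|[q Hq ->]].
      by exists p1'; rewrite act_nf_cat cats0 //; exact: redR_sub Hr.
    exists (rcons p1' (inl q)); rewrite act_nf_cat cats1 //.
    exact: redR_swap Hr Hq.
  + case: (LQ_nil_cases t') => [->|[q Hq ->]].
      by exists (rcons p1' (inr l)); rewrite act_nf_cat cats0.
    exists (rcons (rcons p1' (inr l)) (inl q)); rewrite act_nf_cat cats1 //.
    exact: redR_ext Hr Hq _.
Qed.

Lemma LQ_head_ne s0 p1 t z : reduced (s0 :: p1) -> (p1 = [::] -> isinr s0) ->
  rep t != e -> LQ t (s0 :: p1) = s0 :: z -> False.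
Proof.
move=> Hr Hp1 Ht; case: s0 Hr Hp1 => [w|l] Hr Hp1 /=; last by rewrite (negbTE Ht).
case: p1 Hr Hp1 => [|s1 p2] Hr Hp1; first by have := Hp1 erefl.
move: Hr; rewrite red_cons => /and3P [/andP [/eqP Hw _] Ha _].
clear Hp1; case: s1 Ha => // l _.
case: eqP => // _ [] E _.
have H : QY (t ++ w) w by rewrite -{2}E; exact: rep_spec.
by move/negP: Ht; apply; apply/eqP; apply: rep_eq (pe_cancel H).
Qed.
End Main.

Theorem lemma3p5 (m C : nat) (S : pred (seq 'I_m)) :
  0 < C ->
  ~~ S [::] ->
  forall g : word ('I_C * 'I_m),
    ~ @in_tildeQ C m S g ->
    forall h : word ('I_C * 'I_m),
      @in_tildeQ C m S h ->
      @in_tildeQ C m S (winv g ++ h ++ g) ->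
      @QC_eq C m S h [::].
Proof.
case: C => [//|C'] _ _ g Hg h [t Ht] [t' Ht'].
have Hred0 : reduced S ([::] : seq (Syl m C')) by [].
set p := act S g [::].
have Hp : reduced S p by apply: act_red.
have HgE : QC_eq S g (nf p).
  by have := act_nf g Hred0; rewrite cats0.
have HhE : QC_eq S h (nf (act S h [::])).
  by have := act_nf h Hred0; rewrite cats0.
case Ep : p Hp HgE => [|s0 p1] Hp HgE.
  by case: Hg; exists [::].
have Hp1 : p1 = [::] -> isinr s0.
  move=> E1; subst p1; case: s0 Ep Hp HgE => [w|l] // _ _ HgE.
  by case: Hg; exists w; move: HgE; rewrite /nf /= cats0.
rewrite (act_sound Ht Hred0) act_Aexpand // in HhE.
case Hte: (rep S t == e S).
  by move: HhE; rewrite /LQ Hte.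
have E1 : QC_eq S (h ++ g) (g ++ A_expand C'.+1 t').
  apply: pe_trans (_ : QC_eq S (g ++ winv g ++ h ++ g) _).
    by have := QC_cancel S [::] g (h ++ g); apply: pe_sym.
  exact: pe_catl.
have := act_sound E1 Hred0; rewrite !act_cat -/p Ep.
rewrite (act_sound Ht Hp) act_Aexpand // act_Aexpand // (act_sound HgE) ?LQ_red //.
have [z ->] := act_nf_head t' Hp Hp1.
move=> E2; case: (LQ_head_ne Hp Hp1 (negbT Hte) E2).
Qed.
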